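(* For every $t\in\mathbb Z$, the process $(\overline{\bm Z}^{(t)}_s)_{s\ge t}$ has the distribution of a random walk started at $0$ whose step distribution is that of the increments of $\overline{\bm Y}$ (which is the same as that of $-\overline{\bm X}$).
   Context: Let $\nu=\frac12\delta_{(1,-1)}+\sum_{i,j\ge0}2^{-i-j-3}\delta_{(-i,j)}$ on $\mathbb Z^2$ and $\overline{\bm W}=(\overline{\bm X},\overline{\bm Y})=(\overline{\bm W}_t)_{t\in\mathbb Z}$ a two-sided random walk with i.i.d. steps of law $\nu$ and $\overline{\bm W}_0=(0,0)$. Its coalescent-walk process $\overline{\bm Z}=\{\overline{\bm Z}^{(t)}\}_{t\in\mathbb Z}$ is defined by $\overline{\bm Z}^{(t)}_t=0$ and, for $\ell\ge t$: if $\overline{\bm W}_{\ell+1}-\overline{\bm W}_\ell=(1,-1)$ then $\overline{\bm Z}^{(t)}_{\ell+1}-\overline{\bm Z}^{(t)}_\ell=-1$; if $\overline{\bm W}_{\ell+1}-\overline{\bm W}_\ell=(-i,j)$ with $i,j\ge0$, the increment is $j$ if $\overline{\bm Z}^{(t)}_\ell\ge0$, $i$ if $\overline{\bm Z}^{(t)}_\ell<-i$, and $j-\overline{\bm Z}^{(t)}_\ell$ if $-i\le\overline{\bm Z}^{(t)}_\ell<0$. *)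

(* Defs.v *)
From HB Require Import structures.
From mathcomp Require Import all_boot all_order all_algebra.
From mathcomp Require Import all_classical all_reals all_analysis.
Set Implicit Arguments. Unset Strict Implicit. Unset Printing Implicit Defensive.
Import Order.TTheory GRing.Theory Num.Theory.
Local Open Scope ring_scope.
Local Open Scope classical_set_scope.

Definition nu (R : realType) (w : int * int) : R :=
  if w == (1, -1) then 2^-1
  else if (w.1 <= 0) && (0 <= w.2) then
    (2^-1) ^+ (`|w.1|%N + `|w.2|%N + 3)
  else 0.

(* One step of the coalescent-walk dynamics: given the increment
   w = W_{l+1} - W_l and the current value z = Z_l, returns Z_{l+1}. *)
Definition zstep (w : int * int) (z : int) : int :=
  if w == (1, -1) then z - 1
  else
    let i := - w.1 in
    let j := w.2 in
    if 0 <= z then z + j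
    else if z < - i then z + i
    else z + (j - z).

(* coal inc t n = Z^{(t)}_{t+n}, where inc l = W_{l+1} - W_l. *)
Fixpoint coal (inc : int -> int * int) (t : int) (n : nat) : int :=
  match n with
  | 0%N => 0
  | n'.+1 => zstep (inc (t + n'%:Z)) (coal inc t n')
  end.

Definition incW (T : Type) (X Y : int -> T -> int) (om : T) (l : int) : int * int :=
  (X (l + 1) om - X l om, Y (l + 1) om - Y l om).

Definition iid_steps_nu (d : measure_display) (T : measurableType d)
    (R : realType) (P : probability T R) (X Y : int -> T -> int) : Prop :=
  (forall (l : int) (v : int * int),
      measurable [set om | incW X Y om l = v]) /\
  (forall (s : seq int) (v : seq (int * int)),
      uniq s -> size v = size s ->
      P [set om | forall k, (k < size s)%N ->
                   incW X Y om (nth 0 s k) = nth (0, 0) v k]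
      = (\prod_(k < size s) nu R (nth (0, 0) v k))%:E).

(* Main.v *)
Require Import Defs.
From HB Require Import structures.
From mathcomp Require Import all_boot all_order all_algebra.
From mathcomp Require Import all_classical all_reals all_analysis.
From mathcomp Require Import zify ring lra.
Import Order.TTheory GRing.Theory Num.Theory.
Local Open Scope ring_scope.
Local Open Scope classical_set_scope.

Definition tau (c : int) (w : int * int) : int * int :=
  if (w.1 <= 0) && (0 <= w.2) then
    (if w.2 < c then (- w.2, - w.1) else (w.1 - c, w.2 - c))
  else w.

Definition taui (c : int) (w : int * int) : int * int :=
  if (w.1 <= 0) && (0 <= w.2) then
    (if - w.1 < c then (- w.2, - w.1) else (w.1 + c, w.2 + c))
  else w.

Lemma tauK (c : int) : 0 <= c -> cancel (tau c) (taui c).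
Proof.
move=> c0 [a b]; rewrite /tau /taui /=.
case H: ((a <= 0) && (0 <= b)) => /=; last by rewrite H.
case H2: (b < c) => /=.
  have -> : (- b <= 0) && (0 <= - a) by apply/andP; lia.
  by rewrite !opprK H2.
have -> : (a - c <= 0) && (0 <= b - c) by apply/andP; lia.
have -> : (- (a - c) < c) = false by lia.
congr pair; ring.
Qed.

Lemma tauiK (c : int) : 0 <= c -> cancel (taui c) (tau c).
Proof.
move=> c0 [a b]; rewrite /tau /taui /=.
case H: ((a <= 0) && (0 <= b)) => /=; last by rewrite H.
case H2: (- a < c) => /=.
  have -> : (- b <= 0) && (0 <= - a) by apply/andP; lia.
  by rewrite !opprK H2.
have -> : (a + c <= 0) && (0 <= b + c) by apply/andP; lia.
have -> : (b + c < c) = false by lia.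
congr pair; ring.
Qed.

Lemma nuE (R : realType) (a b : int) : nu R (a, b) =
  if (a == 1) && (b == -1) then 2^-1
  else if (a <= 0) && (0 <= b) then (2^-1) ^+ (`|a|%N + `|b|%N + 3) else 0.
Proof. by []. Qed.

Lemma nu_tau (R : realType) (c : int) w : 0 <= c -> nu R (tau c w) = nu R w.
Proof.
move=> c0; case: w => a b; rewrite /tau /=.
case H: ((a <= 0) && (0 <= b)) => //=.
move/andP: H => [h1 h2].
case H2: (b < c) => /=; rewrite !nuE.
  have -> : (- b == 1) && (- a == -1) = false by lia.
  have -> : (a == 1) && (b == -1) = false by lia.
  have -> : (- b <= 0) && (0 <= - a) by lia.
  have -> : (a <= 0) && (0 <= b) by lia.
  have -> : (`|- b|%N + `|- a|%N + 3 = `|a|%N + `|b|%N + 3)%N by lia.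
  by [].
have -> : (a - c == 1) && (b - c == -1) = false by lia.
have -> : (a == 1) && (b == -1) = false by lia.
have -> : (a - c <= 0) && (0 <= b - c) by lia.
have -> : (a <= 0) && (0 <= b) by lia.
congr (_ ^+ _); lia.
Qed.

Definition cz (z0 : int) : int := if 0 <= z0 then 0 else - z0.

Lemma cz_ge0 z0 : 0 <= cz z0.
Proof. rewrite /cz; case: ifP => //; lia. Qed.

Lemma zstepE (a b z : int) : zstep (a, b) z =
  if (a == 1) && (b == -1) then z - 1
  else if 0 <= z then z + b else if z < - - a then z + - a else z + (b - z).
Proof. by []. Qed.

Lemma nu_supp (R : realType) (a b : int) : nu R (a, b) != 0 ->
  ((a == 1) && (b == -1)) \/ ((a <= 0) && (0 <= b)).
Proof.
rewrite nuE; case: ifP => [h _|_]; first by left.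
by case: ifP => [h _|_]; [right | rewrite eqxx].
Qed.

Lemma tauE (c a b : int) : tau c (a, b) =
  if (a <= 0) && (0 <= b) then
    (if b < c then (- b, - a) else (a - c, b - c))
  else (a, b).
Proof. by []. Qed.

Lemma zstep_tau (R : realType) (z0 z1 : int) w : nu R w != 0 ->
  (zstep (tau (cz z0) w) z0 == z1) = (w.2 == z1 - z0).
Proof.
case: w => a b /nu_supp [/andP[/eqP -> /eqP ->]|/andP [h1 h2]].
  rewrite /tau /= zstepE !eqxx /=; apply/eqP/eqP; lia.
rewrite tauE h1 h2 /= /cz.
have [hz|hz] := boolP (0 <= z0).
  have -> : (b < 0) = false by lia.
  rewrite zstepE.
  have -> : (a - 0 == 1) && (b - 0 == -1) = false by lia.
  rewrite hz; apply/eqP/eqP; lia.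

have [hb|hb] := boolP (b < - z0).
  rewrite zstepE.
  have -> : (- b == 1) && (- a == -1) = false by lia.
  rewrite (negbTE hz).
  have -> : z0 < - - - b by lia.
  apply/eqP/eqP; lia.
rewrite zstepE.
have -> : (a - - z0 == 1) && (b - - z0 == -1) = false by lia.
rewrite (negbTE hz).
have -> : z0 < - - (a - - z0) = false by lia.
apply/eqP/eqP; lia.
Qed.

Definition sig (w : int * int) : int * int := (- w.2, - w.1).

Lemma sigK : involutive sig.
Proof. by case=> a b; rewrite /sig /= !opprK. Qed.

Lemma nu_sig (R : realType) w : nu R (sig w) = nu R w.
Proof.
case: w => a b; rewrite /sig /= !nuE.
have -> : (- b == 1) && (- a == -1) = (a == 1) && (b == -1) by apply/idP/idP; lia.
have -> : (- b <= 0) && (0 <= - a) = (a <= 0) && (0 <= b) by apply/idP/idP; lia.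
have -> : (`|- b|%N + `|- a|%N + 3 = `|a|%N + `|b|%N + 3)%N by lia.
by [].
Qed.

Lemma nu_ge0 (R : realType) w : 0 <= nu R w.
Proof.
case: w => a b; rewrite nuE; case: ifP => _; first by rewrite invr_ge0.
by case: ifP => _ //; rewrite exprn_ge0 // invr_ge0.
Qed.

Local Open Scope ereal_scope.

Definition mu (R : realType) (B : set (int * int)) : \bar R :=
  \esum_(w in B) (nu R w)%:E.

Lemma esum_pickle (R : realType) (f : int * int -> \bar R) (B : set (int * int)) :
  (forall w, 0 <= f w) ->
  \esum_(w in B) f w = \sum_(n <oo | n \in pickle @` B)
     (if @unpickle (int * int)%type n is Some w then f w else 0).
Proof.
move=> f0; rewrite nneseries_esum; last by move=> n _; case: unpickle.
rewrite (_ : [set x | x \in pickle @` B] = pickle @` B); last first.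
  by apply/seteqP; split=> x /=; rewrite inE.
rewrite (reindex_esum B (pickle @` B) pickle); last first.
  by apply: inj_bij => x y _ _; exact: (pcan_inj (@pickleK _)).
by apply: eq_esum => w _; rewrite pickleK.
Qed.

Lemma esumZl (R : realType) (x : R) (f : int * int -> \bar R) (B : set (int * int)) :
  (0 <= x)%R -> (forall w, 0 <= f w) ->
  \esum_(w in B) (x%:E * f w) = x%:E * \esum_(w in B) f w.
Proof.
move=> x0 f0; rewrite !esum_pickle //; last by move=> w; rewrite mule_ge0.
rewrite -nneseriesZl; last by move=> n _; case: unpickle.
by apply: eq_eseriesr => n _; case: unpickle => //; rewrite mule0.
Qed.

Lemma union_meas d (T : measurableType d) (R : realType) (P : probability T R)
  (F : int * int -> set T) (B : set (int * int)) :
  (forall w, B w -> measurable (F w)) -> trivIset B F ->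
  measurable (\bigcup_(w in B) F w) /\
  P (\bigcup_(w in B) F w) = \esum_(w in B) P (F w).
Proof.
move=> mF tF.
pose G n := if @unpickle (int * int)%type n is Some w then F w else set0.
have UE : \bigcup_(w in B) F w = \bigcup_(n in pickle @` B) G n.
  by rewrite bigcup_image; apply: eq_bigcupr => w _; rewrite /G pickleK.
have mG : forall n, (pickle @` B) n -> measurable (G n).
  by move=> _ [w Bw <-]; rewrite /G pickleK; exact: mF.
have tG : trivIset (pickle @` B) G.
  move=> _ _ [w Bw <-] [w' Bw' <-]; rewrite /G !pickleK => h.
  by congr pickle; exact: tF.
split; rewrite UE; first exact: bigcup_measurable.
rewrite measure_bigcup // esum_pickle //.
by apply: eq_eseriesr => n _; rewrite /G; case: unpickle => //; rewrite measure0.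
Qed.

Lemma muP d (T : measurableType d) (R : realType) (P : probability T R)
  (X Y : int -> T -> int) : iid_steps_nu P X Y ->
  forall (l : int) (B : set (int * int)),
  measurable [set om | B (incW X Y om l)] /\
  P [set om | B (incW X Y om l)] = mu R B.
Proof.
move=> [mI pI] l B.
have -> : [set om | B (incW X Y om l)] =
    \bigcup_(w in B) [set om | incW X Y om l = w].
  apply/seteqP; split=> om /=; first by move=> h; exists (incW X Y om l).
  by case=> w Bw ->.
have [] := @union_meas _ _ _ P (fun w => [set om | incW X Y om l = w]) B.
- by move=> w _; exact: mI.
- by move=> w w' _ _ [om [/= h1 h2]]; rewrite -h1 -h2.
move=> mU ->; split => //; apply: eq_esum => w _.
have := pI [:: l] [:: w] erefl erefl; rewrite big_ord1 /= => <-.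
congr (P _); apply/seteqP; split=> om /=.
  by move=> h k; case: k => // _; exact: h.
by move=> /(_ 0%N isT).
Qed.

Arguments muP {d T R P X Y}.

Lemma mu_fin d (T : measurableType d) (R : realType) (P : probability T R)
  (X Y : int -> T -> int) : iid_steps_nu P X Y ->
  forall B, mu R B \is a fin_num.
Proof.
move=> iid B; have [m <-] := muP iid 0 B.
rewrite ge0_fin_numE ?measure_ge0 //.
by apply: (le_lt_trans (probability_le1 P m)); rewrite ltry.
Qed.

Definition ev (T : Type) (X Y : int -> T -> int) (s : seq int) (v : seq (int * int)) :=
  [set om | forall k, (k < size s)%N -> incW X Y om (nth 0%R s k) = nth (0%R, 0%R) v k].

Arguments ev {T}.
Arguments mu_fin {d T R P X Y}.

Lemma mev d (T : measurableType d) (R : realType) (P : probability T R)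
  (X Y : int -> T -> int) : iid_steps_nu P X Y ->
  forall s v, measurable (ev X Y s v).
Proof.
move=> [mI _]; elim=> [|y s IH] v.
  rewrite (_ : ev X Y [::] v = setT) //.
  by apply/seteqP; split=> om //= _ k.
rewrite (_ : ev X Y (y :: s) v =
   [set om | incW X Y om y = nth (0%R, 0%R) v 0] `&` ev X Y s (behead v)).
  exact: measurableI.
apply/seteqP; split=> om /=.
  move=> h; split; first exact: (h 0%N).
  by move=> k hk; rewrite nth_behead; exact: (h k.+1).
by move=> [h0 h] [|k] //= hk; rewrite -nth_behead; exact: h.
Qed.

Arguments mev {d T R P X Y}.

Lemma mu_ge0 (R : realType) B : 0 <= mu R B.
Proof. by apply: esum_ge0 => w _; rewrite lee_fin nu_ge0. Qed.

Lemma Gl d (T : measurableType d) (R : realType) (P : probability T R)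
  (X Y : int -> T -> int) : iid_steps_nu P X Y ->
  forall (s : seq int) (B : nat -> set (int * int)) (s' : seq int)
    (v' : seq (int * int)),
  uniq (s ++ s') -> size v' = size s' ->
  measurable [set om | (forall k, (k < size s)%N -> B k (incW X Y om (nth 0%R s k)))
                       /\ ev X Y s' v' om] /\
  P [set om | (forall k, (k < size s)%N -> B k (incW X Y om (nth 0%R s k)))
                       /\ ev X Y s' v' om] =
  (\big[*%E/1%E]_(0 <= k < size s) mu R (B k)) *
  ((\prod_(k < size s') nu R (nth (0%R, 0%R) v' k))%R)%:E.
Proof.
move=> iid; elim=> [|x s IH] B s' v' Hu Hv.
  have -> : [set om | (forall k, (k < size ([::] : seq int))%N ->
      B k (incW X Y om (nth 0%R ([::] : seq int) k))) /\ ev X Y s' v' om] = ev X Y s' v'.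
    by apply/seteqP; split=> om /=; [case | move=> h; split].
  split; first exact: (mev iid s' v').
  by rewrite big_nil mul1e; exact: iid.2 s' v' Hu Hv.
pose E := [set om | (forall k, (k < size (x :: s))%N -> B k (incW X Y om (nth 0%R (x :: s) k)))
                       /\ ev X Y s' v' om].
pose F w := [set om | (forall k, (k < size s)%N ->
   B k.+1 (incW X Y om (nth 0%R s k))) /\ ev X Y (x :: s') (w :: v') om].
have EU : E = \bigcup_(w in B 0%N) F w.
  rewrite /E /F; apply/seteqP; split=> om /=.
    move=> [h1 h2]; exists (incW X Y om x); first exact: (h1 0%N).
    split; first by move=> k hk; exact: (h1 k.+1).
    by case=> [|k] //= hk; exact: h2.
  case=> w Bw [h1 h2]; have h0 := h2 0%N isT; simpl in h0.
  split; last by move=> k hk; exact: (h2 k.+1).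
  by case=> [|k] //= hk; [rewrite h0 | exact: h1].
have Hu' : uniq (s ++ x :: s') by rewrite -cat1s uniq_catCA.
have Hv' : forall w, size (w :: v') = size (x :: s') by move=> w; rewrite /= Hv.
have IHw := fun w => IH (fun k => B k.+1) (x :: s') (w :: v') Hu' (Hv' w).
have [mU PU] : measurable (\bigcup_(w in B 0%N) F w) /\
    P (\bigcup_(w in B 0%N) F w) = \esum_(w in B 0%N) P (F w).
  apply: union_meas; first by move=> w _; exact: (IHw w).1.
  move=> w w' _ _ [om [[_ h1] [_ h2]]].
  by move: (h1 0%N isT) (h2 0%N isT) => /= -> ->.
rewrite -/E; split; first by rewrite EU.
set c := \big[*%E/1%E]_(0 <= k < size s) mu R (B k.+1).
set Q := (\prod_(k < size s') nu R (nth (0%R, 0%R) v' k))%R.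
have cfin : c \is a fin_num.
  by rewrite /c; apply: (big_ind (fun x => x \is a fin_num)) => //; [exact: fin_numM | move=> i _; exact: (mu_fin iid)].
have cge0 : 0 <= c.
  by rewrite /c; apply: (big_ind (fun x => 0 <= x)) => //; [exact: mule_ge0 | move=> i _; exact: mu_ge0].
have Qge0 : (0 <= Q)%R by apply: prodr_ge0 => i _; exact: nu_ge0.
rewrite EU PU.
transitivity (\esum_(w in B 0%N) ((fine c * Q)%:E * (nu R w)%:E)).
  apply: eq_esum => w _; rewrite (IHw w).2 big_ord_recl /=.
  have -> : (\prod_(i < size s') nu R (nth (0%R, 0%R) (w :: v') (lift ord0 i)))%R = Q.
    by apply: eq_bigr => i _; rewrite lift0.
  rewrite -/c -(fineK cfin) -!EFinM; congr EFin; ring.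
rewrite esumZl; last 2 first.
- by apply: mulr_ge0 => //; exact: fine_ge0.
- by move=> w; rewrite lee_fin nu_ge0.
rewrite -/(mu R (B 0%N)) /= big_nat_recl // -/c.
rewrite -(fineK cfin) -(fineK (mu_fin iid (B 0%N))) -!EFinM; congr EFin; ring.
Qed.

Local Close Scope ereal_scope.


Lemma mu_reindex (R : realType) (e : int * int -> int * int) (A B' : set (int * int)) :
  bijective e -> (forall w, nu R (e w) = nu R w) ->
  (forall w, nu R w != 0 -> (A (e w) <-> B' w)) -> mu R A = mu R B'.
Proof.
move=> be ne hAB; rewrite /mu esum_mkcond [RHS]esum_mkcond.
rewrite (reindex_esum setT setT e); last by rewrite setTT_bijective.
apply: eq_esum => w _; rewrite ne.
have [->|nz] := eqVneq (nu R w) 0.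
  by case: ifP; case: ifP.
have -> : (e w \in A) = (w \in B').
  by apply/idP/idP => /set_mem h; apply/mem_set; apply/(hAB w nz).
by [].
Qed.

Theorem proposition3p3 (d : measure_display) (T : measurableType d)
    (R : realType) (P : probability T R) (X Y : int -> T -> int) :
  (forall om, X 0 om = 0 /\ Y 0 om = 0) ->
  iid_steps_nu P X Y ->
  (* the step law of Y coincides with that of -X *)
  (forall k : int,
      P [set om | Y 1 om - Y 0 om = k] = P [set om | - (X 1 om - X 0 om) = k]) /\
  (* finite-dimensional distributions of (Z^{(t)}_s)_{s >= t} are those of a
     random walk started at 0 with the step law of the increments of Y *)
  (forall (t : int) (n : nat) (z : nat -> int), z 0%N = 0 ->
      P [set om | forall k, (k <= n)%N -> coal (incW X Y om) t k = z k]
      = \big[*%E/1%E]_(k < n) P [set om | Y 1 om - Y 0 om = z k.+1 - z k]).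
Proof.
move=> H0 iid.
have EY : forall m, [set om | Y 1 om - Y 0 om = m] =
    [set om | (fun w => w.2 = m) (incW X Y om 0)].
  by move=> m; apply/seteqP; split=> om; rewrite /incW /= add0r.
split.
- move=> k.
  have EX : [set om | - (X 1 om - X 0 om) = k] =
      [set om | (fun w => - w.1 = k) (incW X Y om 0)].
    by apply/seteqP; split=> om; rewrite /incW /= add0r.
  rewrite EY EX (muP iid 0 (fun w => w.2 = k)).2 (muP iid 0 (fun w => - w.1 = k)).2.
  apply: (mu_reindex R sig).
  + by exists sig; exact: sigK.
  + by move=> w; exact: nu_sig.
  + by move=> [a b] _.
- move=> t n z z0.
  pose s := mkseq (fun k => t + k%:Z) n.
  pose C k := [set w | zstep w (z k) = z k.+1].
  have Hs : uniq (s ++ [::]).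
    rewrite cats0 mkseq_uniq // => a b /addrI h; by case: h.
  have -> : [set om | forall k, (k <= n)%N -> coal (incW X Y om) t k = z k] =
     [set om | (forall k, (k < size s)%N -> C k (incW X Y om (nth 0%R s k)))
               /\ ev X Y [::] [::] om].
    apply/seteqP; split=> om /=.
      move=> h; split => // k; rewrite size_mkseq => hk; rewrite nth_mkseq // /C /=.
      by rewrite -(h k.+1 hk) /= (h k (ltnW hk)).
    move=> [h _]; elim=> [|k IHk] hk; first by rewrite z0.
    rewrite /= IHk ?(ltnW hk) //.
    by have := h k; rewrite size_mkseq nth_mkseq //; apply.
  rewrite (Gl _ _ _ _ _ _ iid s C [::] [::] Hs erefl).2 big_ord0 mule1 size_mkseq big_mkord.
  apply: eq_bigr => k _; rewrite EY (muP iid 0 (fun w => w.2 = z k.+1 - z k)).2.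
  apply: (mu_reindex R (tau (cz (z k)))).
  + exists (taui (cz (z k))); [exact: tauK (cz_ge0 _) | exact: tauiK (cz_ge0 _)].
  + by move=> w; exact: nu_tau (cz_ge0 _).
  + move=> w nz /=; rewrite /C /=; split => h.
      by apply/eqP; rewrite -(zstep_tau R (z k) (z k.+1) w nz); apply/eqP.
    by apply/eqP; rewrite (zstep_tau R (z k) (z k.+1) w nz); apply/eqP.
Qed.
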